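(* Let $A$ be an AP-irreducible sign pattern matrix of order $n$. If $A[\alpha,\beta]$ contains no entry equal to $+$ for any two distinct irreducible components $\alpha$ and $\beta$ of $A_+$, then $A$ allows algebraic positivity.
   Context: A sign pattern matrix is a matrix with entries in $\{+,-,0\}$. Its qualitative class $Q(A)$ is the set of real matrices obtained by replacing each $+$ by some positive number, each $-$ by some negative number and each $0$ by $0$. A real square matrix $M$ is algebraically positive if there is a real polynomial $f$ such that every entry of $f(M)$ is positive. A sign pattern $A$ allows algebraic positivity if some matrix in $Q(A)$ is algebraically positive. The digraph $D(A)$ of an $n\times n$ (sign pattern or real) matrix $A$ has vertex set $\{1,\dots,n\}$ and an arc $i\to j$ iff $a_{ij}\neq 0$; $A$ is irreducible if $n=1$ or $D(A)$ is strongly connected. For a sign pattern $A$: $A_+$ is obtained from $A$ by replacing every entry that is not $+$ by $0$; $A_-$ is obtained by replacing every entry that is not $-$ by $0$; $B_A=A_+-(A_-)^T$, i.e. $(B_A)_{ij}=+$ if $a_{ij}=+$ or $a_{ji}=-$, and $(B_A)_{ij}=0$ otherwise. An irreducible sign pattern $A$ is AP-irreducible if every row and every column of $A$ contains a $+$ and $B_A$ is irreducible. For $\alpha,\beta\subseteq\{1,\dots,n\}$, $A[\alpha,\beta]$ is the submatrix with rows indexed by $\alpha$ and columns indexed by $\beta$, and $A[\alpha]=A[\alpha,\alpha]$. The irreducible components of a sign pattern $M$ of order $n$ are the pairwise disjoint nonempty sets $\alpha_1,\dots,\alpha_m$ partitioning $\{1,\dots,n\}$ such that each $M[\alpha_i]$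 is irreducible and no $\beta\supsetneq\alpha_i$ has $M[\beta]$ irreducible (equivalently, the vertex sets of the strongly connected components of $D(M)$). *)

(* Defs.v *)
From HB Require Import structures.
From mathcomp Require Import all_boot all_order all_algebra.
From mathcomp Require Import reals.
Set Implicit Arguments. Unset Strict Implicit. Unset Printing Implicit Defensive.
Import Order.TTheory GRing.Theory Num.Theory.
Local Open Scope ring_scope.

Inductive sign := SPos | SNeg | SZero.

Definition is_pos (s : sign) : bool := if s is SPos then true else false.
Definition is_neg (s : sign) : bool := if s is SNeg then true else false.
Definition is_nonzero (s : sign) : bool := if s is SZero then false else true.

Notation spattern n := 'M[sign]_n.

Definition in_qual_class (R : realType) (n : nat) (A : spattern n) (M : 'M[R]_n) : Prop :=
  forall i j, match A i j with
              | SPos => 0 < M i j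
              | SNeg => M i j < 0
              | SZero => M i j == 0
              end.

Definition alg_positive (R : realType) (n : nat) (M : 'M[R]_n.+1) : Prop :=
  exists f : {poly R}, forall i j, 0 < (horner_mx M f) i j.

Definition allows_AP (R : realType) (n : nat) (A : spattern n.+1) : Prop :=
  exists M : 'M[R]_n.+1, in_qual_class A M /\ alg_positive M.

Definition arc (n : nat) (A : spattern n) : rel 'I_n := fun i j => is_nonzero (A i j).

(* A[alpha] irreducible: D(A[alpha]) strongly connected (paths inside alpha);
   a singleton alpha is irreducible since connect is reflexive. *)
Definition irreducible_on (n : nat) (A : spattern n) (alpha : {set 'I_n}) : bool :=
  [forall i in alpha, forall j in alpha,
     connect (fun x y => [&& x \in alpha, y \in alpha & arc A x y]) i j].

Definition irreducible (n : nat) (A : spattern n) : bool :=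
  [forall i, forall j, connect (arc A) i j].

Definition pos_part (n : nat) (A : spattern n) : spattern n :=
  \matrix_(i, j) (if is_pos (A i j) then SPos else SZero).
Definition neg_part (n : nat) (A : spattern n) : spattern n :=
  \matrix_(i, j) (if is_neg (A i j) then SNeg else SZero).

(* B_A = A_+ - (A_-)^T *)
Definition B_of (n : nat) (A : spattern n) : spattern n :=
  \matrix_(i, j) (if is_pos (A i j) || is_neg (A j i) then SPos else SZero).

Definition AP_irreducible (n : nat) (A : spattern n) : bool :=
  [&& irreducible A,
      [forall i, exists j, is_pos (A i j)],
      [forall j, exists i, is_pos (A i j)] &
      irreducible (B_of A)].

Definition irr_component (n : nat) (M : spattern n) (alpha : {set 'I_n}) : bool :=
  [&& alpha != set0, irreducible_on M alpha &
      [forall beta : {set 'I_n}, (alpha \proper beta) ==> ~~ irreducible_on M beta]].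

(* Main.v *)
Require Import Defs.
From HB Require Import structures.
From mathcomp Require Import all_boot all_order all_algebra.
From mathcomp Require Import reals ring lra zify.
Set Implicit Arguments. Unset Strict Implicit. Unset Printing Implicit Defensive.
Import Order.TTheory GRing.Theory Num.Theory.
Local Open Scope ring_scope.

Lemma mulE (R : comNzRingType) n (A B : 'M[R]_n.+1) i j :
  (A * B) i j = \sum_l A i l * B l j.
Proof. by rewrite -mulmxE mxE. Qed.

Lemma subE (R : comNzRingType) n (A : 'M[R]_n.+1) i j :
  (A - 1) i j = A i j - (i == j)%:R.
Proof. by rewrite !mxE. Qed.

Lemma horner_rowsum (R : realType) n (M : 'M[R]_n.+1) (p : {poly R}) i :
  (forall i, \sum_j M i j = 1) -> \sum_j (horner_mx M p) i j = p.[1].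
Proof.
move=> hM; elim/poly_ind: p i => [|p c IH] i.
  by rewrite rmorph0 horner0 big1 // => j _; rewrite mxE.
rewrite rmorphD rmorphM /= horner_mx_X horner_mx_C hornerE.
under eq_bigr do rewrite mxE.
rewrite big_split /= hornerMX hornerC mulr1 -(IH i).
congr (_ + _).
  under eq_bigr do rewrite mulE.
  rewrite exchange_big /=; apply eq_bigr => l _.
  by rewrite -mulr_sumr hM mulr1.
rewrite (bigD1 i) //= big1 ?mxE ?eqxx ?addr0 //.
by move=> j /negbTE hj; rewrite mxE eq_sym hj mulr0n.
Qed.

Lemma sum_dl (R : realType) n (f : 'I_n.+1 -> R) i :
  \sum_l (i == l)%:R * f l = f i.
Proof.
rewrite (bigD1 i) //= eqxx mul1r big1 ?addr0 // => l /negbTE hl.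
by rewrite eq_sym hl mul0r.
Qed.

Lemma sum_dr (R : realType) n (f : 'I_n.+1 -> R) i :
  \sum_l f l * (l == i)%:R = f i.
Proof.
rewrite (bigD1 i) //= eqxx mulr1 big1 ?addr0 // => l /negbTE hl.
by rewrite hl mulr0.
Qed.

Lemma AP_of_eig (R : realType) n (M : 'M[R]_n.+1) (h : 'I_n.+1 -> R) :
  (forall i, 0 < h i) ->
  (forall i, \sum_j M i j = 1) ->
  (forall j, \sum_i h i * M i j = h j) ->
  (forall v : 'I_n.+1 -> R, (forall i, \sum_j M i j * v j = v i) -> forall i, v i = v 0) ->
  (forall w : 'I_n.+1 -> R, (forall j, \sum_i w i * M i j = w j) ->
       exists c, forall j, w j = c * h j) ->
  alg_positive M.
Proof.
move=> hpos hrow hcol hker hlker.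
set Km := M - 1.
have hsum : 0 < \sum_i h i by apply: (lt_le_trans (hpos 0)); rewrite (bigD1 0) //= lerDl sumr_ge0 // => i _; apply: ltW.
have colc : forall Y : 'M[R]_n.+1, Km * Y = 0 -> forall i j, Y i j = Y 0 j.
  move=> Y hY i j.
  apply: (hker (fun i => Y i j)) => {}i.
  have := congr1 (fun X : 'M[R]_n.+1 => X i j) hY.
  rewrite mulE mxE.
  under eq_bigr do rewrite subE mulrBl.
  by rewrite sumrB sum_dl => /eqP; rewrite subr_eq0 => /eqP.
have kerim : forall Y Z : 'M[R]_n.+1, Km * Y = 0 -> Y = Km * Z -> Y = 0.
  move=> Y Z hY hYZ.
  have hc := colc Y hY.
  have hz : forall j, \sum_i h i * Y i j = 0.
    move=> j; rewrite hYZ.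
    under eq_bigr do rewrite mulE mulr_sumr.
    rewrite exchange_big /=; apply: big1 => l _.
    under eq_bigr do rewrite mulrA.
    rewrite -mulr_suml.
    under eq_bigr do rewrite subE mulrBr.
    by rewrite sumrB hcol sum_dr subrr mul0r.
  apply/matrixP => i j; rewrite hc mxE.
  have := hz j; under eq_bigr do rewrite hc.
  rewrite -mulr_suml => /eqP; rewrite mulf_eq0 => /orP [/eqP H|/eqP->] //.
  by move: hsum; rewrite H ltxx.
have powk : forall m (Y : 'M[R]_n.+1), Km ^+ m * Y = 0 -> Km * Y = 0.
  elim=> [|m IH] Y; first by rewrite expr0 mul1r => ->; rewrite mulr0.
  rewrite exprSr -mulrA => /IH hKY.
  by apply: (kerim _ Y).
case: (multiplicity_XsubC (char_poly M) 1) => m [r hr hp].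
have hr1 : ~~ root r 1.
  by move: hr; rewrite monic_neq0 ?char_poly_monic.
set X := horner_mx M r.
have hKm : Km = horner_mx M ('X - 1%:P).
  by rewrite rmorphB /= horner_mx_X horner_mx_C.
have hKX : Km * X = 0.
  apply: (powk m).
  have := Cayley_Hamilton M.
  by rewrite hp mulrC rmorphM rmorphXn /= -hKm.
have hXK : X * Km = 0.
  have hcm := comm_horner_mx2 M r ('X - 1%:P).
  by rewrite /X hKm hcm -hKm.
have hc := colc X hKX.
have hrowX : forall i, exists c, forall j, X i j = c * h j.
  move=> i; apply: hlker => j.
  have := congr1 (fun Z : 'M[R]_n.+1 => Z i j) hXK.
  rewrite mulE mxE.
  under eq_bigr do rewrite subE mulrBr.
  by rewrite sumrB sum_dr => /eqP; rewrite subr_eq0 => /eqP.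
case: (hrowX 0) => c hc0.
have hXe : forall i j, X i j = c * h j by move=> i j; rewrite hc hc0.
have hc_ne : c != 0.
  apply/negP => /eqP c0.
  have := horner_rowsum r 0 hrow.
  rewrite -/X big1 => [H|j _]; last by rewrite hXe c0 mul0r. move: hr1; rewrite /root -H eqxx.
  done.
exists (r * r) => i j.
rewrite rmorphM /= -/X mulE.
rewrite (eq_bigr (fun l => (c * c * h j) * h l)); last by move=> l _; rewrite !hXe; ring.
rewrite -mulr_sumr; apply: mulr_gt0 => //; apply: mulr_gt0 => //.
by rewrite lt_def mulf_neq0 //= -expr2 sqr_ge0.
Qed.

Lemma term_le (R : realType) (I : finType) (P : pred I) (f : I -> R) y :
  (forall j, P j -> 0 <= f j) -> P y -> f y <= \sum_(j | P j) f j.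
Proof.
move=> h0 hy; rewrite (bigD1 y) //= lerDl; apply: sumr_ge0 => j /andP [hj _]; exact: h0.
Qed.

Lemma term_le2 (R : realType) (I : finType) (P : pred I) (f : I -> I -> R) x y :
  (forall i j, P i -> 0 <= f i j) -> P x -> f x y <= \sum_(i | P i) \sum_j f i j.
Proof.
move=> h0 hx; apply: (le_trans (_ : _ <= \sum_j f x j)).
  by apply: (@term_le _ _ predT) => // j _; apply: h0.
apply: (@term_le _ _ P (fun i => \sum_j f i j)) => // i hi.
by apply: sumr_ge0 => j _; apply: h0.
Qed.

Lemma closed_cancel (R : realType) n (C : 'I_n.+1 -> 'I_n.+1 -> R) (S : {set 'I_n.+1})
   (v : 'I_n.+1 -> R) :
  (forall i j, 0 <= C i j) ->
  (forall i, \sum_j C i j = \sum_j C j i) ->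
  (forall i j, i \in S -> 0 < C i j -> j \in S) ->
  \sum_(i in S) \sum_j C i j * (v i - v j) = 0.
Proof.
move=> hC0 hcirc hcl.
have ha : forall i j, i \in S -> j \notin S -> C i j = 0.
  move=> i j hi hj; apply/eqP; rewrite eq_le hC0 andbT leNgt; apply/negP => hp.
  by move: hj; rewrite (hcl i j hi hp).
have hrowS : forall i, i \in S -> \sum_(j in S) C i j = \sum_j C i j.
  move=> i hi; rewrite [RHS](bigID (mem S)) /= [X in _ = _ + X]big1 ?addr0 //.
  by move=> j hj; apply: ha.
have hb : forall i j, i \notin S -> j \in S -> C i j = 0.
  have hsum : \sum_(j in S) \sum_(i | i \notin S) C i j = 0.
    have e1 : forall j, \sum_(i | i \notin S) C i j = \sum_i C i j - \sum_(i in S) C i j.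
      by move=> j; rewrite (bigID (mem S) predT) /= addrC addrK.
    under eq_bigr do rewrite e1.
    rewrite sumrB.
    under eq_bigr do rewrite -hcirc -hrowS //.
    by rewrite [X in X - _]exchange_big subrr.
  move=> i j hi hj.
  have H := psumr_eq0P (fun k _ => sumr_ge0 _ (fun l _ => hC0 l k)) hsum hj.
  exact: (psumr_eq0P (fun k _ => hC0 k j) H hi).
under eq_bigr do (under eq_bigr do rewrite mulrBr; rewrite sumrB).
rewrite sumrB; apply/eqP; rewrite subr_eq0; apply/eqP.
have -> : \sum_(i in S) \sum_j C i j * v j = \sum_(j in S) (\sum_i C i j) * v j.
  rewrite exchange_big /= (bigID (mem S) predT) /= [X in _ + X = _]big1 ?addr0.
    apply: eq_bigr => j hj; rewrite mulr_suml (bigID (mem S) predT) /= [X in _ = _ + X]big1 ?addr0 //.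
    by move=> i hi; rewrite hb ?mul0r.
  by move=> j hj; apply: big1 => i hi; rewrite ha ?mul0r.
apply: eq_bigr => i hi; rewrite -mulr_suml hcirc.
by rewrite mulrC.
Qed.

Lemma boundary (T : finType) (e : rel T) (S : {set T}) x y :
  connect e x y -> x \in S -> y \notin S ->
  exists a b, [/\ a \in S, b \notin S & e a b].
Proof.
case/connectP => p; elim: p x => [|z p IH] x /=.
  by move=> _ -> ->.
case/andP => exz pz ly xS yS.
case: (boolP (z \in S)) => zS; first exact: (IH z pz ly zS yS).
by exists x, z.
Qed.

Definition Ctot (R : realType) n (C : 'I_n.+1 -> 'I_n.+1 -> R) := \sum_i \sum_j C i j.
Definition Gtot (R : realType) n (G : 'I_n.+1 -> 'I_n.+1 -> R) := \sum_i \sum_j `|G i j|.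

Lemma Gtot_ge0 (R : realType) n (G : 'I_n.+1 -> 'I_n.+1 -> R) : 0 <= Gtot G.
Proof. by apply: sumr_ge0 => i _; apply: sumr_ge0. Qed.

Lemma Ctot_ge0 (R : realType) n (C : 'I_n.+1 -> 'I_n.+1 -> R) :
  (forall i j, 0 <= C i j) -> 0 <= Ctot C.
Proof. by move=> h; apply: sumr_ge0 => i _; apply: sumr_ge0. Qed.

Lemma step_lemma (R : realType) n (C G : 'I_n.+1 -> 'I_n.+1 -> R) (K : R)
   (v : 'I_n.+1 -> R) (m mn d b : R) (S : {set 'I_n.+1}) y0 :
  (forall i j, 0 <= C i j) ->
  (forall i j, 0 < C i j -> 1 <= C i j) ->
  (forall i j, G i j < 0 -> G i j <= -1) ->
  (forall i j, 0 < G i j -> 0 < C i j) ->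
  (forall i, \sum_j C i j = \sum_j C j i) ->
  (forall i j, connect (fun x y => (0 < C x y) || (G x y < 0)) i j) ->
  0 < K ->
  (forall i, \sum_j (K * C i j + G i j) * (v i - v j) = 0) ->
  (forall j, v j <= m) -> (forall j, mn <= v j) ->
  0 <= d -> b = Gtot G * (m - mn) / K ->
  S = [set j | m - d <= v j] ->
  (exists i0, i0 \in S) ->
  y0 \notin S ->
  exists y, y \notin S /\ m - ((1 + Ctot C + Gtot G) * d + b) <= v y.
Proof.
move=> hC0 hC1 hG1 hGC hcirc hconn hK hnode hvm hvmn hd hb hS [i0 hi0] hy0.
have hGt := Gtot_ge0 G; have hCt := Ctot_ge0 hC0.
have hosc : forall i j, `|v i - v j| <= m - mn.
  move=> i j; rewrite ler_norml; apply/andP; split.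
    have := hvm j; have := hvmn i; lra.
  have := hvm i; have := hvmn j; lra.
have hb0 : 0 <= b.
  rewrite hb; apply: divr_ge0; last exact: ltW.
  apply: mulr_ge0 => //; have := hvm 0; have := hvmn 0; lra.
have inS : forall j, (j \in S) = (m - d <= v j) by move=> j; rewrite hS inE.
case: (boundary (hconn i0 y0) hi0 hy0) => x [y [xS yS /orP exy]].
case: (boolP [exists x', exists y', [&& x' \in S, y' \notin S & 0 < C x' y']]).
  case/existsP => x' /existsP [y' /and3P [x'S y'S cxy]].
  exists y'; split => //.
  have hx' : m - d <= v x' by rewrite -inS.
  have hrow : K * \sum_j C x' j * (v x' - v j) <= Gtot G * (m - mn).
    have := hnode x'.
    under eq_bigr do rewrite mulrDl -mulrA.
    rewrite big_split /= -mulr_sumr.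
    move=> /eqP; rewrite addr_eq0 => /eqP ->.
    apply: (le_trans (ler_norm _)); rewrite normrN.
    apply: (le_trans (ler_norm_sum _ _ _)).
    apply: (le_trans (_ : _ <= \sum_j `|G x' j| * (m - mn))).
      apply: ler_sum => j _; rewrite normrM; apply: ler_wpM2l => //.
    rewrite -mulr_suml; apply: ler_wpM2r; first by have := hosc 0 0; apply: le_trans.
    by apply: (@term_le _ _ predT (fun i => \sum_j `|G i j|)) => // i _; apply: sumr_ge0.
  have hrow' : \sum_j C x' j * (v x' - v j) <= b.
    by rewrite hb ler_pdivlMr // mulrC.
  have hsum : \sum_j C x' j * (v x' - v j + d) <= b + d * Ctot C.
    under eq_bigr do rewrite mulrDr.
    rewrite big_split /= -mulr_suml mulrC; apply: lerD => //.
    apply: ler_wpM2l => //.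
    by apply: (@term_le _ _ predT (fun i => \sum_j C i j)) => // i _; apply: sumr_ge0.
  have hterm : C x' y' * (v x' - v y' + d) <= \sum_j C x' j * (v x' - v j + d).
    apply: (@term_le _ _ predT (fun j => C x' j * (v x' - v j + d))) => // j _.
    apply: mulr_ge0 => //; have := hvm j; lra.
  have h1 := hC1 _ _ cxy.
  have hnn : 0 <= v x' - v y' + d by have := hvm y'; lra.
  have : v x' - v y' + d <= C x' y' * (v x' - v y' + d).
    by rewrite ler_peMl.
  nra.
rewrite negb_exists => /forallP hno.
have hcl : forall i j, i \in S -> 0 < C i j -> j \in S.
  move=> i j hi hc; have := hno i; rewrite negb_exists => /forallP /(_ j).
  by rewrite hi hc andbT /= negbK.
have gxy : G x y < 0.
  case: exy => // cxy; by have := hcl _ _ xS cxy; rewrite (negbTE yS).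
exists y; split => //.
have hx : m - d <= v x by rewrite -inS.
have hcan := closed_cancel v hC0 hcirc hcl.
have hGS : \sum_(i in S) \sum_j G i j * (v i - v j) = 0.
  have : \sum_(i in S) \sum_j (K * C i j + G i j) * (v i - v j) = 0.
    by apply: big1 => i _; apply: hnode.
  under eq_bigr do (under eq_bigr do rewrite mulrDl -mulrA; rewrite big_split /= -mulr_sumr).
  by rewrite big_split /= -mulr_sumr hcan mulr0 add0r.
have hT : forall i j, i \in S -> G i j * (v i - v j) <= `|G i j| * d.
  move=> i j hi; have hvi : m - d <= v i by rewrite -inS.
  case: (ltgtP (G i j) 0) => hg.
    rewrite ltr0_norm //; have := hvm j; nra.
  - rewrite gtr0_norm //; apply: ler_wpM2l; first exact: ltW.
    have : j \in S by apply: (hcl i) => //; apply: hGC.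
    rewrite inS; have := hvm i; lra.
  - by rewrite hg normr0 !mul0r.
have hsum : \sum_(i in S) \sum_j (`|G i j| * d - G i j * (v i - v j)) <= Gtot G * d.
  under eq_bigr do rewrite sumrB.
  rewrite sumrB hGS subr0.
  under eq_bigr do rewrite -mulr_suml.
  rewrite -mulr_suml; apply: ler_wpM2r => //.
  rewrite /Gtot [X in _ <= X](bigID (mem S)) /= lerDl.
  by apply: sumr_ge0 => i _; apply: sumr_ge0.
have hxy : `|G x y| * d - G x y * (v x - v y) <= Gtot G * d.
  apply: le_trans hsum.
  apply: (@term_le2 _ _ (mem S) (fun i j => `|G i j| * d - G i j * (v i - v j))) => // i j hi.
  by rewrite subr_ge0; apply: hT.
have hg1 := hG1 _ _ gxy.
rewrite ltr0_norm // in hxy.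
have hd' : 0 <= - G x y * d by apply: mulr_ge0 => //; lra.
case: (lerP (v x) (v y)) => hxy'.
  have : 0 <= (Ctot C + Gtot G) * d by apply: mulr_ge0 => //; lra.
  lra.
have : (v x - v y) <= - G x y * (v x - v y) by rewrite ler_peMl //; lra.
have : 0 <= Ctot C * d by apply: mulr_ge0.
nra.
Qed.

Fixpoint sb (R : realType) (a : R) (k : nat) : R :=
  if k is k'.+1 then a * sb a k' + 1 else 0.

Lemma sb_ge0 (R : realType) (a : R) k : 1 <= a -> 0 <= sb a k.
Proof.
move=> ha; elim: k => [|k IH] //=; apply: addr_ge0 => //; apply: mulr_ge0 => //.
by apply: le_trans ha.
Qed.

Lemma kernel_lemma (R : realType) n (C G : 'I_n.+1 -> 'I_n.+1 -> R) (K : R)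
   (v : 'I_n.+1 -> R) :
  (forall i j, 0 <= C i j) ->
  (forall i j, 0 < C i j -> 1 <= C i j) ->
  (forall i j, G i j < 0 -> G i j <= -1) ->
  (forall i j, 0 < G i j -> 0 < C i j) ->
  (forall i, \sum_j C i j = \sum_j C j i) ->
  (forall i j, connect (fun x y => (0 < C x y) || (G x y < 0)) i j) ->
  0 < K ->
  Gtot G * sb (1 + Ctot C + Gtot G) n < K ->
  (forall i, \sum_j (K * C i j + G i j) * (v i - v j) = 0) ->
  forall i, v i = v 0.
Proof.
move=> hC0 hC1 hG1 hGC hcirc hconn hK hKb hnode.
have hGt := Gtot_ge0 G; have hCt := Ctot_ge0 hC0.
set a := 1 + Ctot C + Gtot G.
have ha : 1 <= a by rewrite /a; lra.
case: (@arg_maxP _ _ _ 0 predT v isT) => im _ himax.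
case: (@arg_minP _ _ _ 0 predT v isT) => imn _ himin.
set m := v im; set mn := v imn.
have hvm : forall j, v j <= m by move=> j; apply: himax.
have hvmn : forall j, mn <= v j by move=> j; apply: himin.
set b := Gtot G * (m - mn) / K.
have hb0 : 0 <= b.
  apply: divr_ge0; last exact: ltW.
  apply: mulr_ge0 => //; have := hvm 0; have := hvmn 0; lra.
set d := fun k => b * sb a k.
have hd0 : forall k, 0 <= d k by move=> k; apply: mulr_ge0 => //; apply: sb_ge0.
have hdS : forall k, d k.+1 = a * d k + b by move=> k; rewrite /d /=; ring.
have hdm : forall k, d k <= d k.+1.
  move=> k; rewrite hdS; have := hd0 k; have : 0 <= (a - 1) * d k.
    by apply: mulr_ge0 => //; lra.
  nra.
set S := fun k => [set j | m - d k <= v j].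
have hSS : forall k, S k \subset S k.+1.
  move=> k; apply/subsetP => j; rewrite !inE; have := hdm k; lra.
have claim : forall k, S k = setT \/ (k < #|S k|)%N.
  elim=> [|k IH].
    right; rewrite card_gt0; apply/set0Pn; exists im; rewrite inE /d /= mulr0 subr0.
    exact: lexx.
  have [hT|hT] := eqVneq (S k) setT.
    left; apply/eqP; rewrite eqEsubset subsetT /= -hT; exact: hSS.
  case: IH => [hT'|hlt]; first by move: hT; rewrite hT' eqxx.
  have [y0 _ hy0] : exists2 y0, y0 \in [set: 'I_n.+1] & y0 \notin S k.
    by apply/subsetPn; rewrite subTset.
  have him : im \in S k by rewrite inE -/m; have := hd0 k; lra.
  have [y [hyS hyv]] := step_lemma hC0 hC1 hG1 hGC hcirc hconn hK hnode hvm hvmn (hd0 k)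
      (erefl b) (erefl (S k)) (ex_intro _ im him) hy0.
  right.
  have hpr : S k \proper S k.+1.
    apply/properP; split; first exact: hSS.
    by exists y => //; rewrite inE hdS.
  by apply: leq_trans (proper_card hpr).
have hSn : S n = setT.
  case: (claim n) => // hlt; apply/eqP; rewrite eqEcard subsetT /= cardsT card_ord.
  exact: hlt.
have : imn \in S n by rewrite hSn inE.
rewrite inE -/mn /d /b => hmn.
have hosc0 : 0 <= m - mn by have := hvm 0; have := hvmn 0; lra.
have hsb := sb_ge0 n ha.
have hK' : (m - mn) * K <= Gtot G * sb a n * (m - mn).
  have : m - mn <= Gtot G * (m - mn) / K * sb a n by lra.
  rewrite mulrAC ler_pdivlMr //; lra.
have hmm : m - mn <= 0.
  have : (m - mn) * (K - Gtot G * sb a n) <= 0 by lra.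
  have : 0 < K - Gtot G * sb a n by lra.
  nra.
move=> i; have := hvm i; have := hvmn i; have := hvm 0; have := hvmn 0; lra.
Qed.

Definition compat (R : realType) (s : sign) (r : R) : bool :=
  match s with SPos => 0 <= r | SNeg => r <= 0 | SZero => r == 0 end.

Lemma compat0 (R : realType) s : compat s (0 : R).
Proof. by case: s => /=. Qed.

Lemma compatD (R : realType) s (a b : R) : compat s a -> compat s b -> compat s (a + b).
Proof.
case: s => /=; [exact: addr_ge0 | move=> ha hb; lra | by move=> /eqP -> /eqP ->; rewrite addr0].
Qed.

Lemma compat_sum (R : realType) (I : finType) s (f : I -> R) :
  (forall i, compat s (f i)) -> compat s (\sum_i f i).
Proof.
move=> h; apply: (big_ind (fun r => compat s r)) => //; [exact: compat0 | exact: compatD].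
Qed.

Definition eB n (P : spattern n) : rel 'I_n := fun x y => is_pos (P x y) || is_neg (P y x).

Definition stepf (R : realType) n (P : spattern n) (x y : 'I_n) : 'I_n -> 'I_n -> R :=
  fun i j => if is_pos (P x y) then ((i == x) && (j == y))%:R
             else - ((i == y) && (j == x))%:R.

Fixpoint gw (R : realType) n (P : spattern n) (x : 'I_n) (p : seq 'I_n) : 'I_n -> 'I_n -> R :=
  match p with
  | [::] => fun _ _ => 0
  | y :: q => fun i j => stepf R P x y i j + gw R P y q i j
  end.


Lemma sum_pair_l (R : realType) n (i x y : 'I_n.+1) :
  \sum_j (((i == x) && (j == y))%:R : R) = (i == x)%:R.
Proof.
rewrite (bigD1 y) //= eqxx andbT big1 ?addr0 // => j /negbTE hj.
by rewrite hj andbF.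
Qed.

Lemma sum_pair_r (R : realType) n (i x y : 'I_n.+1) :
  \sum_j (((j == x) && (i == y))%:R : R) = (i == y)%:R.
Proof.
rewrite (bigD1 x) //= eqxx big1 ?addr0 // => j /negbTE hj.
by rewrite hj.
Qed.

Lemma gw_div (R : realType) n (P : spattern n.+1) p x i :
  \sum_j gw R P x p i j - \sum_j gw R P x p j i = (i == x)%:R - (i == last x p)%:R.
Proof.
elim: p x => [|y p IH] x /=; first by rewrite !subrr.
rewrite !big_split /= opprD addrACA IH.
rewrite /stepf; case: (is_pos (P x y)).
  rewrite sum_pair_l sum_pair_r; ring.
rewrite !sumrN sum_pair_l sum_pair_r; ring.
Qed.

Lemma gw_compat (R : realType) n (P : spattern n.+1) p x :
  path (eB P) x p -> forall i j, compat (P i j) (gw R P x p i j).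
Proof.
elim: p x => [|y p IH] x /=; first by move=> _ i j; apply: compat0.
case/andP => exy hp i j; apply: compatD; last exact: IH.
rewrite /stepf; move: exy; rewrite /eB.
case hxy: (is_pos (P x y)) => /=.
  case: (boolP ((i == x) && (j == y))) => [/andP [/eqP -> /eqP ->]|_]; last by move=> _; apply: compat0.
  by move: hxy; case: (P x y) => //= _ _; rewrite ler01.
move=> hyx.
case: (boolP ((i == y) && (j == x))) => [/andP [/eqP -> /eqP ->]|_]; last by rewrite oppr0; exact: compat0.
by move: hyx; case: (P y x) => //= _; rewrite lerN10.
Qed.

Definition circ (R : realType) n (Z : 'I_n.+1 -> 'I_n.+1 -> R) :=
  forall k, \sum_j Z k j = \sum_j Z j k.

Definition good_flow (R : realType) n (P : spattern n.+1) (Z : 'I_n.+1 -> 'I_n.+1 -> R) :=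
  [/\ circ Z, forall i j, compat (P i j) (Z i j),
      forall i j, P i j = SPos -> 1 <= Z i j &
      forall i j, P i j = SNeg -> Z i j <= -1].

Lemma entry_flow (R : realType) n (P : spattern n.+1) i j :
  (P i j = SPos -> connect (eB P) j i) ->
  (P i j = SNeg -> connect (eB P) i j) ->
  exists Z : 'I_n.+1 -> 'I_n.+1 -> R,
    [/\ circ Z, forall a b, compat (P a b) (Z a b),
        P i j = SPos -> 1 <= Z i j & P i j = SNeg -> Z i j <= -1].
Proof.
move=> hpos hneg.
case hP: (P i j).
- case/connectP: (hpos hP) => p hp hl.
  have hpath : path (eB P) i (j :: p) by rewrite /= hp /eB hP.
  exists (gw R P i (j :: p)); split.
  + move=> k; apply/eqP; rewrite -subr_eq0; apply/eqP.
    by rewrite gw_div /= -hl subrr.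
  + exact: gw_compat.
  + move=> _ /=; rewrite /stepf hP /= !eqxx /=.
    have := (@gw_compat R _ _ _ _ hp) i j; rewrite hP /= => h; lra.
  + by [].
- case/connectP: (hneg hP) => p hp hl.
  exists (fun a b => - ((a == i) && (b == j))%:R + gw R P i p a b); split.
  + move=> k; apply/eqP; rewrite -subr_eq0; apply/eqP.
    rewrite !big_split /= opprD addrACA gw_div -hl !sumrN sum_pair_l.
    rewrite (_ : \sum_j0 ((j0 == i) && (k == j))%:R = (k == j)%:R :> R); first ring.
    by rewrite sum_pair_r.
  + move=> a b; apply: compatD; last exact: gw_compat.
    case: (boolP ((a == i) && (b == j))) => [/andP [/eqP -> /eqP ->]|_].
      by rewrite hP /= lerN10.
    by rewrite oppr0 compat0.
  + by [].
  + move=> _; rewrite !eqxx /=.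
    have := (@gw_compat R _ _ _ _ hp) i j; rewrite hP /= => h; lra.
- exists (fun _ _ => 0); split => //.
  + by move=> a b; apply: compat0.
Qed.

Lemma total_flow (R : realType) n (P : spattern n.+1) :
  (forall i j, P i j = SPos -> connect (eB P) j i) ->
  (forall i j, P i j = SNeg -> connect (eB P) i j) ->
  exists Z : 'I_n.+1 -> 'I_n.+1 -> R, good_flow P Z.
Proof.
move=> hpos hneg.
have : forall ij : 'I_n.+1 * 'I_n.+1, exists Z : 'I_n.+1 -> 'I_n.+1 -> R,
    [/\ circ Z, forall a b, compat (P a b) (Z a b),
        P ij.1 ij.2 = SPos -> 1 <= Z ij.1 ij.2 & P ij.1 ij.2 = SNeg -> Z ij.1 ij.2 <= -1].
  by move=> [i j]; apply: entry_flow; [apply: hpos | apply: hneg].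
case/fin_all_exists => Zf hZf.
exists (fun a b => \sum_ij Zf ij a b); split.
- move=> k; rewrite exchange_big [RHS]exchange_big /=.
  by apply: eq_bigr => ij _; case: (hZf ij) => h _ _ _; apply: h.
- move=> a b; apply: compat_sum => ij; by case: (hZf ij).
- move=> i j hP; rewrite (bigD1 (i, j)) //=.
  case: (hZf (i, j)) => _ _ /= h _; have := h hP.
  have : 0 <= \sum_(ij | ij != (i, j)) Zf ij i j.
    apply: sumr_ge0 => ij _; case: (hZf ij) => _ hc _ _; have := hc i j; by rewrite hP.
  lra.
- move=> i j hP; rewrite (bigD1 (i, j)) //=.
  case: (hZf (i, j)) => _ _ _ /= h; have := h hP.
  have : \sum_(ij | ij != (i, j)) Zf ij i j <= 0.
    apply: sumr_le0 => ij _; case: (hZf ij) => _ hc _ _; have := hc i j; by rewrite hP.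
  lra.
Qed.

Lemma connect_restr n (e : rel 'I_n.+1) (al : {set 'I_n.+1}) y z :
  (forall u w, u \in al -> e u w -> connect e w z -> w \in al) ->
  y \in al -> z \in al -> connect e y z ->
  connect (fun u w => [&& u \in al, w \in al & e u w]) y z.
Proof.
move=> hcl hy hz /connectP [p hp hl]; apply/connectP; exists p => //.
elim: p y hy hp hl => [|w q IH] y hy //= /andP [eyw hq] hl.
have hw : w \in al.
  apply: (hcl y) => //; apply/connectP; exists q => //.
by rewrite hy hw eyw /=; apply: IH.
Qed.

Lemma scc_irr n (A : spattern n.+1) x :
  irr_component (pos_part A)
    [set y | connect (Defs.arc (pos_part A)) x y && connect (Defs.arc (pos_part A)) y x].
Proof.
set e := Defs.arc (pos_part A).
set al := [set y | connect e x y && connect e y x].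
have hx : x \in al by rewrite inE connect0.
apply/and3P; split.
- by apply/set0Pn; exists x.
- apply/forallP => y; apply/implyP => hy; apply/forallP => z; apply/implyP => hz.
  apply: connect_restr => //.
    move=> u w hu euw hwz; rewrite inE; move: hu hz; rewrite !inE => /andP [hxu hux] /andP [hxz hzx].
    apply/andP; split.
      by apply: connect_trans hxu (connect1 euw).
    by apply: connect_trans hwz hzx.
  move: hy hz; rewrite !inE => /andP [hxy hyx] /andP [hxz hzx].
  exact: connect_trans hyx hxz.
- apply/forallP => be; apply/implyP => /properP [hsub [z hzb hza]].
  apply/negP => hirr.
  have hxb : x \in be by apply: (subsetP hsub).
  have hc : forall u w, u \in be -> w \in be -> connect e u w.
    move=> u w hu hw.
    move/forallP: hirr => /(_ u); rewrite hu /= => /forallP /(_ w); rewrite hw /=.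
    apply: connect_sub => a b /and3P [_ _ hab]; exact: connect1.
  by move: hza; rewrite inE (hc _ _ hxb hzb) (hc _ _ hzb hxb).
Qed.

Lemma pos_back n (A : spattern n.+1) :
  (forall alpha beta : {set 'I_n.+1},
      irr_component (pos_part A) alpha -> irr_component (pos_part A) beta ->
      alpha != beta ->
      forall i j, i \in alpha -> j \in beta -> ~~ is_pos (A i j)) ->
  forall i j, A i j = SPos -> connect (Defs.arc (pos_part A)) j i.
Proof.
move=> hyp i j hij.
set e := Defs.arc (pos_part A).
have := hyp _ _ (scc_irr A i) (scc_irr A j).
case: eqP => [heq _|_ /(_ isT i j)].
  have : j \in [set y | connect e j y && connect e y j] by rewrite inE connect0.
  by rewrite -heq inE => /andP [].
by rewrite !inE !connect0 hij => /(_ isT isT).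
Qed.

Lemma sumG_ge (R : realType) n (G : 'I_n.+1 -> 'I_n.+1 -> R) i :
  - Gtot G <= \sum_j G i j.
Proof.
apply: (le_trans (_ : _ <= - \sum_j `|G i j|)).
  rewrite lerN2; apply: (@term_le _ _ predT (fun i => \sum_j `|G i j|)) => // k _.
  by apply: sumr_ge0.
rewrite -sumrN; apply: ler_sum => j _; have := ler_norm (- G i j); rewrite normrN; lra.
Qed.

Theorem theorem3p16 (R : realType) (n : nat) (A : spattern n.+1) :
  AP_irreducible A ->
  (forall alpha beta : {set 'I_n.+1},
      irr_component (pos_part A) alpha -> irr_component (pos_part A) beta ->
      alpha != beta ->
      forall i j, i \in alpha -> j \in beta -> ~~ is_pos (A i j)) ->
  allows_AP R A.
Proof.
move=> /and4P [hirrA hrowp _ hirrB] hyp.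
have hBe : Defs.arc (B_of A) =2 eB A by move=> x y; rewrite /Defs.arc /eB mxE; case: ifP.
have [G [hcG hcompG hGp hGn]] : exists G : 'I_n.+1 -> 'I_n.+1 -> R, good_flow A G.
  apply: total_flow => i j _; rewrite -(eq_connect hBe); move/forallP: hirrB => /(_ _) /forallP; apply.
have hPe : Defs.arc (pos_part A) =2 eB (pos_part A).
  by move=> x y; rewrite /Defs.arc /eB !mxE; case: (A x y); case: (A y x).
have [C [hcC hcompC hCp _]] : exists C : 'I_n.+1 -> 'I_n.+1 -> R, good_flow (pos_part A) C.
  apply: total_flow => i j; rewrite mxE.
    move=> hij; rewrite -(eq_connect hPe); apply: (pos_back hyp).
    by move: hij; case: (A i j).
  by case: (A i j).
have hC0 : forall i j, 0 <= C i j.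
  by move=> i j; have := hcompC i j; rewrite mxE; case: (A i j) => //= /eqP ->.
have hCz : forall i j, ~~ is_pos (A i j) -> C i j = 0.
  by move=> i j; have := hcompC i j; rewrite mxE; case: (A i j) => //= /eqP ->.
have hCp' : forall i j, A i j = SPos -> 1 <= C i j.
  by move=> i j hij; apply: hCp; rewrite mxE hij.
have hGz : forall i j, A i j = SZero -> G i j = 0.
  by move=> i j hij; have := hcompG i j; rewrite hij => /eqP.
have hGpos : forall i j, A i j = SPos -> 0 <= G i j.
  by move=> i j hij; have := hcompG i j; rewrite hij.
have hC1 : forall i j, 0 < C i j -> 1 <= C i j.
  move=> i j hc; case hA: (A i j); first exact: hCp'.
    by move: hc; rewrite hCz ?hA // ltxx.
  by move: hc; rewrite hCz ?hA // ltxx.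
have hG1 : forall i j, G i j < 0 -> G i j <= -1.
  move=> i j hg; case hA: (A i j); last 1 first.
  - by move: hg; rewrite hGz // ltxx.
  - by have := hGpos i j hA; lra.
  - exact: hGn.
have hGC : forall i j, 0 < G i j -> 0 < C i j.
  move=> i j hg; case hA: (A i j).
  - by have := hCp' i j hA; lra.
  - by have := hGn i j hA; lra.
  - by move: hg; rewrite hGz // ltxx.
have hconn : forall i j, connect (fun x y => (0 < C x y) || (G x y < 0)) i j.
  move=> i j; move/forallP: hirrA => /(_ i) /forallP /(_ j).
  apply: connect_sub => x y; rewrite /Defs.arc => hxy; apply: connect1.
  move: hxy; case hA: (A x y) => //= _.
    have h1 := hCp' x y hA; have hc : 0 < C x y by lra.
    by rewrite hc.
  have h1 := hGn x y hA; have hc : G x y < 0 by lra.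
  by rewrite hc orbT.
have hGt := Gtot_ge0 G; have hCt := Ctot_ge0 hC0.
set a := 1 + Ctot C + Gtot G.
have ha : 1 <= a by rewrite /a; lra.
have hsb := sb_ge0 n ha.
set K := Gtot G * sb a n + Gtot G + 1.
have hGsb : 0 <= Gtot G * sb a n by apply: mulr_ge0.
have hK : 0 < K by rewrite /K; lra.
have hKb : Gtot G * sb a n < K by rewrite /K; lra.
set F := fun i j => K * C i j + G i j.
set h := fun i => \sum_j F i j.
have hh : forall i, 0 < h i.
  move=> i; move/forallP: hrowp => /(_ i) /existsP [j hj].
  rewrite /h /F big_split /= -mulr_sumr.
  have hC1j : 1 <= \sum_j C i j.
    apply: le_trans (hCp' i j _) _; first by move: hj; case: (A i j).
    by apply: (@term_le _ _ predT (C i)) => // k _.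
  have := sumG_ge G i.
  have : K <= K * \sum_j C i j by rewrite ler_peMr // ltW.
  rewrite /K; lra.
have hh0 : forall i, h i != 0 by move=> i; rewrite gt_eqF.
have hcolF : forall j, \sum_i F i j = h j.
  move=> j; rewrite /h /F !big_split /= -!mulr_sumr hcC hcG //.
exists (\matrix_(i, j) (F i j / h i)); split.
  move=> i j; rewrite mxE /F; case hA: (A i j).
  - apply: divr_gt0 => //; have := hCp' i j hA; have := hGpos i j hA; nra.
  - rewrite pmulr_llt0 ?invr_gt0 // hCz ?hA // mulr0 add0r.
    by have := hGn i j hA; lra.
  - by rewrite hCz ?hA // hGz // mulr0 add0r mul0r.
apply: (@AP_of_eig _ _ _ h) => //.
- move=> i.
  under eq_bigr do rewrite mxE.
  by rewrite -mulr_suml divff // hh0.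
- move=> j; under eq_bigr do rewrite mxE mulrC (divfK (hh0 _)).
  exact: hcolF.
- move=> v hv; apply: (kernel_lemma hC0 hC1 hG1 hGC hcC hconn hK hKb) => i.
  have := hv i; under eq_bigr do rewrite mxE mulrAC.
  rewrite -mulr_suml => /(congr1 (fun x => x * h i)); rewrite (divfK (hh0 _)) => hs.
  under eq_bigr do rewrite mulrBr.
  by rewrite sumrB -mulr_suml hs -/(h i) -/F mulrC subrr.
- move=> w hw.
  set u := fun i => w i / h i.
  have hCt' : Ctot (fun i j => C j i) = Ctot C by rewrite /Ctot exchange_big.
  have hGt' : Gtot (fun i j => G j i) = Gtot G by rewrite /Gtot exchange_big.
  have hconn' : forall i j, connect (fun x y => (0 < C y x) || (G y x < 0)) i j.
    move=> i j; have := connect_rev (fun x y => (0 < C x y) || (G x y < 0)) i j.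
    by rewrite /= hconn.
  have hK' : Gtot (fun i j => G j i) * sb (1 + Ctot (fun i j => C j i) + Gtot (fun i j => G j i)) n < K.
    by rewrite hCt' hGt'.
  have hker := kernel_lemma (C := fun i j => C j i) (G := fun i j => G j i) (v := u)
     (fun i j => hC0 j i) (fun i j => hC1 j i) (fun i j => hG1 j i) (fun i j => hGC j i)
     (fun k => esym (hcC k)) hconn' hK hK'.
  exists (u 0) => j.
  have -> : u 0 = u j.
    apply: esym; apply: hker => k.
    have := hw k; under eq_bigr do rewrite mxE.
    move=> hs.
    have e1 : \sum_i F i k * u i = w k.
      rewrite -hs; apply: eq_bigr => i _; rewrite /u; field; exact: hh0.
    have e2 : u k * h k = w k by rewrite /u (divfK (hh0 _)).
    under eq_bigr do rewrite mulrBr.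
    rewrite sumrB -mulr_suml.
    rewrite (_ : \sum_i (K * C i k + G i k) * u i = w k); last exact: e1.
    rewrite (_ : \sum_i (K * C i k + G i k) = h k); last exact: hcolF k.
    by rewrite mulrC e2 subrr.
  by rewrite /u (divfK (hh0 _)).
Qed.
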